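(* Let $0<b<1$, let $\mu,\nu$ be the Gibbs distributions of two soft-hardcore models $(G,\lambda^\mu),(G,\lambda^\nu)$ on $G=(V,E)$ with $n=|V|$, both $b$-marginally bounded, with $d_{\mathrm{par}}(\mu,\nu)\le\theta:=\frac{b}{2(1-b)n}$. Let $C=b^3$. Then: (i) for all $\sigma$, $\mu(\sigma)=0$ implies $\nu(\sigma)=0$; (ii) $\sqrt{\mathrm{Var}[W]}\le K\,d_{TV}(\mu,\nu)$ with $K=\frac{4n}{bC}$; (iii) $\mathbb{E}[W]\ge\frac1L$ with $L=2$; where $W=\frac{w_\nu(\sigma)}{w_\mu(\sigma)}$ with $\sigma\sim\mu$.
   Context: Hardcore model $(G,\lambda)$: weight $w(\sigma)=\prod_{v:\sigma_v=+1}\lambda_v$ for $\sigma\in\{-1,+1\}^V$ with $\{v:\sigma_v=+1\}$ independent in $G$, else $0$; Gibbs distribution is $w/Z$. Soft: $\lambda_v>0$ for all $v$. $d_{\mathrm{par}}(\mu,\nu)=\max_v|\lambda^\mu_v-\lambda^\nu_v|$. $b$-marginally bounded: for every $\Lambda\subseteq V$, feasible $\sigma\in\{\pm1\}^\Lambda$, $v\in V$, $c\in\{\pm1\}$, $\mu^\sigma_v(c)>0$ implies $\mu^\sigma_v(c)\ge b$ ($\mu^\sigma_v$ = marginal at $v$ of $\mu$ conditioned on $\sigma$). *)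

(* Defs.v *)
From mathcomp Require Import all_boot all_order all_algebra.
From mathcomp Require Import reals.
Set Implicit Arguments. Unset Strict Implicit. Unset Printing Implicit Defensive.
Import Order.TTheory GRing.Theory Num.Theory.
Local Open Scope ring_scope.

Section HC.
Variables (R : realType) (V : finType).

(* A spin configuration sigma in {-1,+1}^V, encoded with true = +1, false = -1. *)
Definition config := {ffun V -> bool}.

Definition simple_graph (G : rel V) : Prop :=
  symmetric G /\ irreflexive G.

Definition independent (G : rel V) (S : {set V}) : bool :=
  [forall u in S, forall v in S, ~~ G u v].

Definition plus_set (s : config) : {set V} := [set v | s v].

Definition hc_weight (G : rel V) (lam : V -> R) (s : config) : R :=
  if independent G (plus_set s) then \prod_(v | s v) lam v else 0.

Definition hc_Z (G : rel V) (lam : V -> R) : R := \sum_(s : config) hc_weight G lam s.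

Definition gibbs (G : rel V) (lam : V -> R) (s : config) : R :=
  hc_weight G lam s / hc_Z G lam.

Definition soft (lam : V -> R) : Prop := forall v, 0 < lam v.

Definition agrees (L : {set V}) (s t : config) : bool := [forall v in L, t v == s v].

Definition partial_prob (G : rel V) (lam : V -> R) (L : {set V}) (s : config) : R :=
  \sum_(t : config | agrees L s t) gibbs G lam t.

Definition cond_marginal (G : rel V) (lam : V -> R) (L : {set V}) (s : config)
  (v : V) (c : bool) : R :=
  (\sum_(t : config | agrees L s t && (t v == c)) gibbs G lam t) / partial_prob G lam L s.

Definition marginally_bounded (G : rel V) (lam : V -> R) (b : R) : Prop :=
  forall (L : {set V}) (s : config) (v : V) (c : bool),
    0 < partial_prob G lam L s ->
    0 < cond_marginal G lam L s v c -> b <= cond_marginal G lam L s v c.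

Definition d_par (lmu lnu : V -> R) : R := \big[Num.max/0]_(v : V) `|lmu v - lnu v|.

Definition d_TV (mu nu : config -> R) : R := 2^-1 * \sum_(s : config) `|mu s - nu s|.

Definition ratioW (G : rel V) (lmu lnu : V -> R) (s : config) : R :=
  hc_weight G lnu s / hc_weight G lmu s.

Definition expW (G : rel V) (lmu lnu : V -> R) : R :=
  \sum_(s : config) gibbs G lmu s * ratioW G lmu lnu s.

Definition varW (G : rel V) (lmu lnu : V -> R) : R :=
  \sum_(s : config) gibbs G lmu s * (ratioW G lmu lnu s - expW G lmu lnu) ^+ 2.

End HC.

(* Main.v *)
Require Import Defs.
From mathcomp Require Import all_boot all_order all_algebra.
From mathcomp Require Import reals.
From mathcomp Require Import ring lra.
Import Order.TTheory GRing.Theory Num.Theory.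
Local Open Scope ring_scope.
Set Implicit Arguments. Unset Strict Implicit. Unset Printing Implicit Defensive.


Lemma prod_close (R : realType) (I : Type) (l : seq I) (r : I -> R) (d d0 : R) :
  0 <= d -> 0 <= d0 -> (forall i, `|r i - 1| <= d) -> (forall i, `|r i - 1| <= d0) ->
  (size l)%:R * d0 <= 1/2 ->
  `|\prod_(i <- l) r i - 1| <= 2 * (size l)%:R * d0 /\
  `|\prod_(i <- l) r i - 1| <= 2 * (size l)%:R * d.
Proof.
move=> d0p dp hd hd0; elim: l => [|a l IH] /=.
  by rewrite big_nil subrr normr0 !mulr0 !mul0r lexx.
rewrite -addn1 natrD big_cons => hs.
have k0 : 0 <= (size l)%:R :> R by rewrite ler0n.
have [IH1 IH2] : `|\prod_(i <- l) r i - 1| <= 2 * (size l)%:R * d0 /\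
  `|\prod_(i <- l) r i - 1| <= 2 * (size l)%:R * d.
  apply: IH; nra.
set P := \prod_(i <- l) r i in IH1 IH2 *.
have e : r a * P - 1 = (r a - 1) + (r a - 1) * (P - 1) + (P - 1) by ring.
have t1 : `|r a * P - 1| <= `|r a - 1| + `|r a - 1| * `|P - 1| + `|P - 1|.
  rewrite e -normrM; apply: le_trans (ler_normD _ _) _.
  by rewrite lerD2r ler_normD.
have f1 : `|P - 1| <= 1 by nra.
have t2 : `|r a - 1| * `|P - 1| <= `|r a - 1|.
  by rewrite -[X in _ <= X]mulr1 ler_wpM2l.
have := hd a; have := hd0 a; have := normr_ge0 (r a - 1); have := normr_ge0 (P - 1).
split; nra.
Qed.

Lemma prod_low (R : realType) (I : Type) (l : seq I) (r : I -> R) (d : R) :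
  0 <= d -> (forall i, 0 <= r i) -> (forall i, 1 - d <= r i) ->
  (size l)%:R * d <= 1 -> 1 - (size l)%:R * d <= \prod_(i <- l) r i.
Proof.
move=> dp hr hd; elim: l => [|a l IH] /=.
  by rewrite big_nil mul0r subr0.
rewrite -addn1 natrD big_cons => hs.
have k0 : 0 <= (size l)%:R :> R by rewrite ler0n.
have IH1 : 1 - (size l)%:R * d <= \prod_(i <- l) r i by apply: IH; nra.
set P := \prod_(i <- l) r i in IH1 *.
have h1 : (1 - d) * (1 - (size l)%:R * d) <= r a * P.
  apply: ler_pM; [nra | nra | exact: hd | exact: IH1].
nra.
Qed.

Lemma pair_ineq (R : realType) (L1 L2 c y b : R) : 0 < L1 -> 0 <= L2 -> 0 <= c -> 0 < b ->
  b * (1 + L2) <= 1 ->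
  b / 2 * `|L2 / L1 - 1| * (L1 * c) <= `|L1 * c - L2 * y| + `|c - y|.
Proof.
move=> h1 h2 hc hb hbl.
have e1 : `|L2 / L1 - 1| * (L1 * c) = `|L2 * c - L1 * c|.
  have e0 : (L2 / L1 - 1) * (L1 * c) = L2 * c - L1 * c.
    by field; exact: lt0r_neq0.
  by rewrite -e0 normrM (ger0_norm (mulr_ge0 (ltW h1) hc)).
rewrite -[b / 2 * _ * _]mulrA e1.
have e2 : L2 * c - L1 * c = - (L1 * c - L2 * y) + L2 * (c - y) by ring.
have t1 : `|L2 * c - L1 * c| <= `|L1 * c - L2 * y| + L2 * `|c - y|.
  rewrite e2; apply: le_trans (ler_normD _ _) _.
  by rewrite normrN normrM (ger0_norm h2).
have hA := normr_ge0 (L1 * c - L2 * y); have hB := normr_ge0 (c - y).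
have p1 := ler_wpM2l (_ : 0 <= b / 2) t1.
have p2 : 0 <= (1 - b / 2) * `|L1 * c - L2 * y| by apply: mulr_ge0 => //; nra.
have p3 : 0 <= (1 - b * L2 / 2) * `|c - y| by apply: mulr_ge0 => //; nra.
have p4 : 0 <= b / 2 by lra.
have := p1 p4; nra.
Qed.

Section Aux.
Variables (R : realType) (V : finType) (G : rel V).
Hypothesis HG : simple_graph G.

Definition zc : config V := [ffun _ => false].
Definition tog (v : V) (s : config V) : config V :=
  [ffun u => if u == v then ~~ s u else s u].

Lemma togK v : involutive (tog v).
Proof. move=> s; apply/ffunP => u; rewrite !ffunE; case: eqP => // _; exact: negbK. Qed.

Lemma indep_sub (S T : {set V}) : T \subset S -> independent G S -> independent G T.
Proof.
move=> sub /forallP H; apply/forallP => u; apply/implyP => uT.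
apply/forallP => w; apply/implyP => wT.
move: (H u); rewrite (subsetP sub _ uT) /= => /forallP /(_ w).
by rewrite (subsetP sub _ wT).
Qed.

Lemma w_ge0 (lam : V -> R) : soft lam -> forall s, 0 <= hc_weight G lam s.
Proof.
move=> hl s; rewrite /hc_weight; case: ifP => _ //.
by apply: prodr_ge0 => u _; exact: ltW.
Qed.

Lemma w_indep (lam : V -> R) s : soft lam -> independent G (plus_set s) ->
  0 < hc_weight G lam s.
Proof.
move=> hl hi; rewrite /hc_weight hi.
by apply: prodr_gt0 => u _.
Qed.

Lemma w_zc (lam : V -> R) : hc_weight G lam zc = 1.
Proof.
rewrite /hc_weight.
have -> : independent G (plus_set zc).
  by apply/forallP => u; rewrite inE ffunE.
by rewrite big_pred0 // => u; rewrite ffunE.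
Qed.

Lemma Z_gt0 (lam : V -> R) : soft lam -> 0 < hc_Z G lam.
Proof.
move=> hl; rewrite /hc_Z (bigD1 zc) //= w_zc.
have : 0 <= \sum_(i | i != zc) hc_weight G lam i.
  by apply: sumr_ge0 => i _; exact: w_ge0.
lra.
Qed.

Lemma gibbs_ge0 (lam : V -> R) s : soft lam -> 0 <= gibbs G lam s.
Proof.
move=> hl; rewrite /gibbs; apply: divr_ge0; first exact: w_ge0.
exact: ltW (Z_gt0 hl).
Qed.

Lemma sum_gibbs (lam : V -> R) : soft lam -> \sum_s gibbs G lam s = 1.
Proof.
move=> hl; rewrite /gibbs -mulr_suml divff //.
by have := Z_gt0 hl; rewrite /hc_Z => /lt0r_neq0.
Qed.

Lemma gibbs0 (lam : V -> R) s : soft lam ->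
  (gibbs G lam s = 0) <-> ~~ independent G (plus_set s).
Proof.
move=> hl; split.
  move=> h; apply/negP => hi; have := w_indep hl hi.
  move: h; rewrite /gibbs => /eqP; rewrite mulf_eq0 invr_eq0.
  have := Z_gt0 hl; rewrite lt0r => /andP[/negbTE -> _]; rewrite orbF => /eqP ->.
  by rewrite ltxx.
by move=> /negbTE h; rewrite /gibbs /hc_weight h mul0r.
Qed.


Lemma agrees_pred v c t :
  agrees [set~ v] zc t && (t v == c) = (t == if c then tog v zc else zc).
Proof.
apply/idP/eqP.
  move=> /andP[/forallP H /eqP tv]; apply/ffunP => u; rewrite ?ffunE.
  case: (eqVneq u v) => [->|nuv]; first by rewrite tv; clear tv; case: c; rewrite ?ffunE ?eqxx.
  move: (H u); rewrite in_setC1 nuv ffunE /= => /eqP ->.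
  by clear tv; case: c; rewrite ?ffunE ?(negbTE nuv).
move=> ->; apply/andP; split.
  apply/forallP => u; apply/implyP; rewrite in_setC1 => nuv.
  by case: c; rewrite !ffunE ?(negbTE nuv).
by case: c; rewrite !ffunE eqxx.
Qed.

Lemma w_ev (lam : V -> R) v : hc_weight G lam (tog v zc) = lam v.
Proof.
have Hp : (fun u => tog v zc u) =1 pred1 v.
  by move=> u; rewrite /= !ffunE; case: eqP.
rewrite /hc_weight.
have -> : independent G (plus_set (tog v zc)).
  apply/forallP => u; apply/implyP; rewrite inE Hp /= => /eqP ->.
  apply/forallP => w; apply/implyP; rewrite inE Hp /= => /eqP ->.
  by case: HG => _ ->.
by rewrite (big_pred1 v).
Qed.

Lemma mb_lam (lam : V -> R) b v : soft lam -> marginally_bounded G lam b ->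
  b * (1 + lam v) <= lam v /\ b * (1 + lam v) <= 1.
Proof.
move=> hl hmb.
have Zp := Z_gt0 hl.
have lp := hl v.
have pp : partial_prob G lam [set~ v] zc = (1 + lam v) / hc_Z G lam.
  rewrite /partial_prob (bigID (fun t : config V => t v)) /=.
  rewrite (big_pred1 (tog v zc)); last first.
    by move=> t; have := agrees_pred v true t; rewrite eqb_id => ->.
  rewrite (big_pred1 zc); last first.
    by move=> t; have := agrees_pred v false t; rewrite eqbF_neg => ->.
  by rewrite /gibbs w_ev w_zc mulrDl addrC.
have cm : forall c, cond_marginal G lam [set~ v] zc v c =
    (if c then lam v else 1) / (1 + lam v).
  move=> c; rewrite /cond_marginal pp (big_pred1 (if c then tog v zc else zc)); last first.
    by move=> t; rewrite /= agrees_pred.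
  have hZ : hc_Z G lam != 0 by rewrite lt0r_neq0.
  have h1 : 1 + lam v != 0 by rewrite lt0r_neq0 //; lra.
  case: c; rewrite /gibbs ?w_ev ?w_zc; field.
    by rewrite hZ h1.
  by rewrite hZ h1.
have ppos : 0 < partial_prob G lam [set~ v] zc.
  by rewrite pp divr_gt0 //; lra.
have h1 : 0 < 1 + lam v by lra.
split.
  have := hmb _ _ v true ppos; rewrite cm /= ler_pdivlMr //; apply.
  by rewrite divr_gt0.
have := hmb _ _ v false ppos; rewrite cm /= ler_pdivlMr // mul1r; apply.
by rewrite invr_gt0.
Qed.

Lemma mb_plus (lam : V -> R) b v : soft lam -> marginally_bounded G lam b ->
  b <= \sum_(t : config V | t v) gibbs G lam t.
Proof.
move=> hl hmb.
have pp : partial_prob G lam set0 zc = 1.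
  rewrite /partial_prob -(sum_gibbs hl); apply: eq_bigl => t.
  by apply/forallP => u; rewrite inE.
have cm : cond_marginal G lam set0 zc v true = \sum_(t : config V | t v) gibbs G lam t.
  rewrite /cond_marginal pp divr1; apply: eq_bigl => t.
  have -> : agrees set0 zc t by apply/forallP => u; rewrite inE.
  by rewrite eqb_id.
rewrite -cm; apply: hmb; rewrite ?pp ?ltr01 //.
rewrite cm (bigD1 (tog v zc)); last by rewrite !ffunE eqxx.
have : 0 < gibbs G lam (tog v zc).
  by rewrite /gibbs w_ev divr_gt0 ?Z_gt0.
have : 0 <= \sum_(i : config V | i v && (i != tog v zc)) gibbs G lam i.
  by apply: sumr_ge0 => i _; exact: gibbs_ge0.
rewrite /=; lra.
Qed.

Lemma gibbs_tog (lam : V -> R) (v : V) (s : config V) : s v -> independent G (plus_set s) ->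
  gibbs G lam s = lam v * gibbs G lam (tog v s).
Proof.
move=> sv hi.
have hi' : independent G (plus_set (tog v s)).
  apply: indep_sub hi; apply/subsetP => u; rewrite !inE !ffunE.
  by case: eqP => // ->; rewrite sv.
rewrite /gibbs /hc_weight hi hi' mulrA; congr (_ / _).
rewrite (bigD1 v) //=; congr (_ * _); apply: eq_bigl => u.
rewrite ffunE; case: eqP => [->|_]; first by rewrite sv.
by rewrite andbT.
Qed.

Lemma pairing (lmu lnu : V -> R) (b : R) (v : V) : soft lmu -> soft lnu -> 0 < b ->
  b * (1 + lnu v) <= 1 -> b <= \sum_(t : config V | t v) gibbs G lmu t ->
  b ^+ 2 / 2 * `|lnu v / lmu v - 1| <= \sum_s `|gibbs G lmu s - gibbs G lnu s|.
Proof.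
move=> hmu hnu hb hbl hplus.
rewrite (bigID (fun s : config V => s v)) /=.
rewrite [X in _ <= _ + X](reindex_inj (can_inj (togK v))) /=.
rewrite [X in _ <= _ + X](eq_bigl (fun s : config V => s v)); last first.
  by move=> s; rewrite /= ffunE eqxx negbK.
rewrite -big_split /=.
have step : forall s : config V, s v ->
    b / 2 * `|lnu v / lmu v - 1| * gibbs G lmu s <=
    `|gibbs G lmu s - gibbs G lnu s| + `|gibbs G lmu (tog v s) - gibbs G lnu (tog v s)|.
  move=> s sv; case hi: (independent G (plus_set s)).
    rewrite (gibbs_tog lmu sv hi) (gibbs_tog lnu sv hi).
    apply: pair_ineq => //; first [exact: hmu | exact: ltW (hnu v) | exact: gibbs_ge0].
  have -> : gibbs G lmu s = 0 by apply/gibbs0 => //; rewrite hi.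
  by rewrite mulr0 addr_ge0.
apply: le_trans (ler_sum _ step).
rewrite -mulr_sumr.
have h0 : 0 <= b / 2 * `|lnu v / lmu v - 1|.
  by rewrite mulr_ge0 // divr_ge0 // ltW.
have := ler_wpM2l h0 hplus.
have := normr_ge0 (lnu v / lmu v - 1).
nra.
Qed.

End Aux.

Unset Implicit Arguments.

Theorem lemma6p2 (R : realType) (V : finType) (G : rel V) (lmu lnu : V -> R) (b : R) :
  simple_graph G ->
  0 < b -> b < 1 ->
  soft lmu -> soft lnu ->
  marginally_bounded G lmu b -> marginally_bounded G lnu b ->
  d_par lmu lnu <= b / (2 * (1 - b) * #|V|%:R) ->
  let C := b ^+ 3 in
  let K := 4 * #|V|%:R / (b * C) in
  let L := 2 : R in
  [/\ (forall s : config V, gibbs G lmu s = 0 -> gibbs G lnu s = 0),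
      Num.sqrt (varW G lmu lnu) <= K * d_TV (gibbs G lmu) (gibbs G lnu)
    & 1 / L <= expW G lmu lnu].
Proof.
move=> HG hb0 hb1 hmu hnu mbmu mbnu hpar C K L.
rewrite /K /C /L.
set n := #|V|%:R : R.
have n0 : 0 <= n by rewrite /n ler0n.
set d0 := (2 * n)^-1.
have d00 : 0 <= d0 by rewrite /d0 invr_ge0 mulr_ge0.
have hsz : forall k, (k <= #|V|)%N -> k%:R * d0 <= 1/2.
  move=> k hk; have [nz|nz] := eqVneq #|V| 0%N.
    move: hk; rewrite nz leqn0 => /eqP ->; rewrite mul0r; lra.
  have np : 0 < n by rewrite /n ltr0n lt0n.
  have hk' : k%:R <= n by rewrite /n ler_nat.
  have e : n * d0 = 1/2 by rewrite /d0; field; rewrite lt0r_neq0.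
  rewrite -e; exact: ler_wpM2r.
have Lm : forall u, b * (1 + lmu u) <= lmu u /\ b * (1 + lmu u) <= 1.
  by move=> u; apply: (mb_lam HG).
have Ln : forall u, b * (1 + lnu u) <= lnu u /\ b * (1 + lnu u) <= 1.
  by move=> u; apply: (mb_lam HG).
have hlow : forall u, b / (1 - b) <= lmu u.
  move=> u; have [h1 _] := Lm u; rewrite ler_pdivrMr; lra.
have hdp : forall u, `|lmu u - lnu u| <= d_par lmu lnu.
  move=> u; rewrite /d_par; exact: (le_bigmax _ (fun v => `|lmu v - lnu v|) u).
have hth : b / (2 * (1 - b) * n) = b / (1 - b) * d0.
  have [nz|nz] := eqVneq n 0.
    by rewrite /d0 nz !mulr0 invr0 !mulr0.
  rewrite /d0; field; rewrite nz /=.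
  by rewrite subr_eq0 gt_eqF.
have hr : forall u, `|lnu u / lmu u - 1| <= d0.
  move=> u; have lp := hmu u.
  have e : lnu u / lmu u - 1 = (lnu u - lmu u) / lmu u by field; rewrite lt0r_neq0.
  rewrite e normf_div (gtr0_norm lp) ler_pdivrMr // distrC.
  apply: le_trans (hdp u) _; apply: le_trans hpar _.
  rewrite hth mulrC; apply: ler_wpM2l => //.
have hr0 : forall u, 0 <= lnu u / lmu u.
  by move=> u; rewrite divr_ge0 // ltW.
set r := fun u => lnu u / lmu u.
have hW : forall s : config V, independent G (plus_set s) ->
    ratioW G lmu lnu s = \prod_(u <- [seq u <- index_enum V | s u]) r u.
  move=> s hi; rewrite /ratioW /hc_weight hi -prodf_div big_filter.
  by [].
have hsize : forall s : config V, (size [seq u <- index_enum V | s u] <= #|V|)%N.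
  move=> s; rewrite size_filter; apply: leq_trans (count_size _ _) _.
  by rewrite cardT enumT.
split.
- move=> s h0; apply/gibbs0 => //; move: h0; move/gibbs0; apply => //.
- set T := d_TV (gibbs G lmu) (gibbs G lnu).
  have hsum : \sum_s `|gibbs G lmu s - gibbs G lnu s| = 2 * T.
    by rewrite /T /d_TV mulrA divff ?mul1r // pnatr_eq0.
  have hT0 : 0 <= T.
    have : 0 <= \sum_s `|gibbs G lmu s - gibbs G lnu s| by apply: sumr_ge0 => s _.
    lra.
  have hb2 : 0 < b ^+ 2 by rewrite exprn_gt0.
  set dl := 4 * T / b ^+ 2.
  have dl0 : 0 <= dl.
    by apply: divr_ge0; [apply: mulr_ge0 => //; lra | exact: ltW].
  have hrd : forall u, `|r u - 1| <= dl.
    move=> u; rewrite /dl ler_pdivlMr //.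
    have := pairing hmu hnu hb0 (proj2 (Ln u)) (mb_plus HG u hmu mbmu).
    rewrite hsum /r /=.
    have := normr_ge0 (lnu u / lmu u - 1).
    nra.
  set D := 2 * n * dl.
  have D0 : 0 <= D by rewrite /D mulr_ge0 // mulr_ge0.
  have hpt : forall s, gibbs G lmu s * (ratioW G lmu lnu s - 1) ^+ 2 <=
      gibbs G lmu s * D ^+ 2.
    move=> s; case hi: (independent G (plus_set s)).
      rewrite (hW s hi); set l := [seq u <- index_enum V | s u].
      have h1 := hsz _ (hsize s).
      have [_ h2] := prod_close dl0 d00 hrd hr h1.
      have hl : (size l)%:R <= n by rewrite /n ler_nat hsize.
      have h3 : 0 <= gibbs G lmu s by apply: gibbs_ge0.
      apply: ler_wpM2l => //.
      move: h2; set x := \prod_(u <- l) r u - 1 => /ler_normlP [ha hb].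
      have : 2 * (size l)%:R * dl <= D.
        rewrite /D; apply: ler_wpM2r => //; lra.
      move=> hD; nra.
    have -> : gibbs G lmu s = 0 by apply/gibbs0 => //; rewrite hi.
    by rewrite !mul0r.
  set E := expW G lmu lnu.
  have hvar : \sum_s gibbs G lmu s * (ratioW G lmu lnu s - 1) ^+ 2 - varW G lmu lnu
      = (E - 1) ^+ 2.
    rewrite /varW -/E -sumrB.
    transitivity (\sum_s (E - 1) * (2 * (gibbs G lmu s * ratioW G lmu lnu s)
                                    - (E + 1) * gibbs G lmu s)).
      by apply: eq_bigr => s _; ring.
    rewrite -mulr_sumr sumrB -!mulr_sumr sum_gibbs // -/(expW G lmu lnu) -/E.
    ring.
  have hvar2 : varW G lmu lnu <= D ^+ 2.
    have : \sum_s gibbs G lmu s * (ratioW G lmu lnu s - 1) ^+ 2 <= D ^+ 2.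
      apply: le_trans (ler_sum _ (fun s _ => hpt s)) _.
      by rewrite -mulr_suml sum_gibbs // mul1r.
    have := sqr_ge0 (E - 1); lra.
  have hvar0 : 0 <= varW G lmu lnu.
    apply: sumr_ge0 => s _; apply: mulr_ge0; [exact: gibbs_ge0 | exact: sqr_ge0].
  apply: (le_trans (y := Num.sqrt (D ^+ 2))).
    by rewrite ler_sqrt // sqr_ge0.
  rewrite sqrtr_sqr ger0_norm //.
  have [nz|nz] := eqVneq #|V| 0%N.
    by rewrite /D /n nz mulr0n !mulr0 !mul0r lexx.
  have npos : (0 < #|V|)%N by rewrite lt0n.
  case/card_gt0P: npos => v0 _.
  have [h1 h2] := Lm v0; have lp := hmu v0.
  have bh : b <= 1/2 by nra.
  have e : 4 * n / (b * b ^+ 3) * T - D = 4 * n * T * (1 - 2 * b ^+ 2) / b ^+ 4.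
    by rewrite /D /dl; field; rewrite lt0r_neq0.
  suff : 0 <= 4 * n * T * (1 - 2 * b ^+ 2) / b ^+ 4 by lra.
  apply: divr_ge0; last by rewrite exprn_ge0 // ltW.
  apply: mulr_ge0; first by rewrite mulr_ge0 // mulr_ge0.
  rewrite !expr2; nra.
- have hpt3 : forall s, gibbs G lmu s / 2 <= gibbs G lmu s * ratioW G lmu lnu s.
    move=> s; case hi: (independent G (plus_set s)).
      rewrite (hW s hi); set l := [seq u <- index_enum V | s u].
      have h1 := hsz _ (hsize s).
      have h2 : 1 - (size l)%:R * d0 <= \prod_(u <- l) r u.
        apply: prod_low => //; last by lra.
        move=> u; have := hr u; rewrite /r /= => /ler_normlP [ha hb]; lra.
      have h3 : 0 <= gibbs G lmu s by apply: gibbs_ge0.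
      have : gibbs G lmu s * (1 / 2) <= gibbs G lmu s * \prod_(u <- l) r u.
        apply: ler_wpM2l => //; lra.
      lra.
    have -> : gibbs G lmu s = 0 by apply/gibbs0 => //; rewrite hi.
    by rewrite mul0r mul0r.
  rewrite /expW; apply: le_trans (ler_sum _ (fun s _ => hpt3 s)).
  by rewrite -mulr_suml sum_gibbs.
Qed.
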